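(* Let PSSPM denote the set of all configurations reachable in the Parallel Symmetric Sand Pile Model from some initial configuration $(\underline{n})$, $n\in\mathbb N$, and SSPM the set of all configurations reachable in the Symmetric Sand Pile Model from some initial configuration $(\underline{n})$, $n \in \mathbb N$. Then PSSPM $\subsetneq$ SSPM.
   Context: A configuration is a sequence $(c_i)_{i\in\mathbb Z}$ of nonnegative integers with only finitely many positive values. For $n\in\mathbb N$, $(\underline{n})$ denotes the configuration with $c_0=n$ and $c_i=0$ for $i\neq 0$. Two local rules act on a column $i$: rule $\mathcal L$ at $i$ is applicable if $c_{i-1}+2\le c_i$ and moves one grain from column $i$ to column $i-1$ ($c_{i-1}\mapsto c_{i-1}+1$, $c_i\mapsto c_i-1$); rule $\mathcal R$ at $i$ is applicable if $c_i\ge c_{i+1}+2$ and moves one grain from column $i$ to column $i+1$. In SSPM, one transition consists of applying exactly once one applicable rule ($\mathcal L$ or $\mathcal R$) at one column. In PSSPM, one transition consists of applying rules simultaneously on every column where some rule is applicable, applying at most one of the two rules on each column (where both are applicable, one of them is chosen). A configuration is reachable in a model from $(\underline{n})$ if it is obtained from $(\underline{n})$ by a finite (possibly empty) sequence of transitions of that model. *)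

(* Defs.v *)
From Stdlib Require Import ZArith Relations.
Open Scope Z_scope.

(* A configuration: a sequence (c_i)_{i in Z} of nonnegative integers.
   (Finite support is automatic for configurations reachable from (n).) *)
Definition config := Z -> nat.

Definition finite_support (c : config) : Prop :=
  exists N : Z, forall i, N < Z.abs i -> c i = 0%nat.

Definition single (n : nat) : config :=
  fun i => if Z.eqb i 0 then n else 0%nat.

Definition L_app (c : config) (i : Z) : Prop := Nat.le (Nat.add (c (i - 1)) 2) (c i).
Definition R_app (c : config) (i : Z) : Prop := Nat.le (Nat.add (c (i + 1)) 2) (c i).

Definition move (c : config) (i j : Z) : config :=
  fun k => if Z.eqb k i then Nat.sub (c k) 1
           else if Z.eqb k j then Nat.add (c k) 1 else c k.

Definition SSPM_step (c c' : config) : Prop :=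
  exists i, (L_app c i /\ c' = move c i (i - 1))
         \/ (R_app c i /\ c' = move c i (i + 1)).

Inductive rule := RuleL | RuleR.

Definition PSSPM_step (c c' : config) : Prop :=
  exists ch : Z -> option rule,
    (forall i, ch i = None <-> (~ L_app c i /\ ~ R_app c i)) /\
    (forall i, ch i = Some RuleL -> L_app c i) /\
    (forall i, ch i = Some RuleR -> R_app c i) /\
    (forall i, c' i =
       Nat.add (Nat.add (Nat.sub (c i) (if ch i then 1%nat else 0%nat))
        (match ch (i + 1) with Some RuleL => 1%nat | _ => 0%nat end))
        (match ch (i - 1) with Some RuleR => 1%nat | _ => 0%nat end)).

Definition reachable (step : config -> config -> Prop) (c0 c : config) : Prop :=
  clos_refl_trans config step c0 c.

Definition SSPM_set (c : config) : Prop := exists n, reachable SSPM_step (single n) c.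
Definition PSSPM_set (c : config) : Prop := exists n, reachable PSSPM_step (single n) c.

(* Main.v *)
Require Import Defs.
From Stdlib Require Import ZArith Relations Lia FunctionalExtensionality.
Open Scope Z_scope.

Definition unimodal (c : config) : Prop :=
  forall j k l, j < k -> k < l -> (c j <= c k)%nat \/ (c l <= c k)%nat.

Lemma single_unimodal n : unimodal (single n).
Proof.
  intros j k l H1 H2; unfold single.
  destruct (Z.eqb_spec j 0), (Z.eqb_spec k 0), (Z.eqb_spec l 0); lia.
Qed.

Lemma single_fs n : finite_support (single n).
Proof.
  exists 0. intros i H; unfold single; destruct (Z.eqb_spec i 0); lia.
Qed.

Lemma uni_move c i i' : unimodal c -> (i' = i - 1 \/ i' = i + 1) ->
  (c i' + 2 <= c i)%nat -> unimodal (move c i i').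
Proof.
  intros U Hi Ha j k l Hjk Hkl.
  assert (V : forall a b e, a >= b \/ b >= e \/ (c a <= c b)%nat \/ (c e <= c b)%nat).
  { intros a b e. destruct (Z_lt_le_dec a b); [|lia].
    destruct (Z_lt_le_dec b e); [|lia]. destruct (U a b e); auto; lia. }
  pose proof (V j k l). pose proof (V j i' l). pose proof (V i k l). pose proof (V j k i).
  unfold move.
  destruct Hi; subst i';
  destruct (Z.eqb_spec k i), (Z.eqb_spec j i), (Z.eqb_spec l i);
  try destruct (Z.eqb_spec k (i-1)); try destruct (Z.eqb_spec j (i-1));
  try destruct (Z.eqb_spec l (i-1));
  try destruct (Z.eqb_spec k (i+1)); try destruct (Z.eqb_spec j (i+1));
  try destruct (Z.eqb_spec l (i+1));
  subst; lia.
Qed.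

Lemma fs_move c i i' : finite_support c -> (2 <= c i)%nat ->
  (i' = i - 1 \/ i' = i + 1) -> finite_support (move c i i').
Proof.
  intros [N HN] Hc Hi. exists (N + 1). intros k Hk. unfold move.
  destruct (Z.eqb_spec k i).
  - assert (c k = 0%nat) by (apply HN; lia). lia.
  - destruct (Z.eqb_spec k i').
    + exfalso. assert (c i = 0%nat) by (apply HN; lia). lia.
    + apply HN; lia.
Qed.

Lemma sspm_inv n c : reachable SSPM_step (single n) c -> unimodal c /\ finite_support c.
Proof.
  unfold reachable. intro H. apply clos_rt_rtn1 in H. induction H.
  - split; [apply single_unimodal | apply single_fs].
  - destruct IHclos_refl_trans_n1 as [U F].
    destruct H as [i [[Ha ->]|[Ha ->]]]; unfold L_app, R_app in Ha; split.
    + apply uni_move; auto; lia.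
    + apply fs_move; auto; lia.
    + apply uni_move; auto; lia.
    + apply fs_move; auto; lia.
Qed.

Definition P (c : config) (d : Z -> option rule) : config := fun k =>
  Nat.add (Nat.add (Nat.sub (c k) (if d k then 1%nat else 0%nat))
        (match d (k + 1) with Some RuleL => 1%nat | _ => 0%nat end))
        (match d (k - 1) with Some RuleR => 1%nat | _ => 0%nat end).

Lemma step_one c ch d i r :
  unimodal c ->
  (forall k, ch k = Some RuleL -> L_app c k) ->
  (forall k, ch k = Some RuleR -> R_app c k) ->
  (forall k, d k = None \/ d k = ch k) ->
  d i = None -> ch i = Some r ->
  SSPM_step (P c d) (P c (fun k => if Z.eqb k i then Some r else d k)).
Proof.
  intros U HL HR Hd Hdi Hci.
  exists i. destruct r; [left|right]; split.
  - pose proof (HL i Hci) as Li. unfold L_app in *. unfold P.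
    replace (i - 1 + 1) with i by ring. rewrite Hdi.
    pose proof (U (i-1-1) (i-1) i ltac:(lia) ltac:(lia)) as Ui.
    destruct (d (i-1-1)) as [[|]|] eqn:E.
    + destruct (d (i-1)) as [[|]|]; destruct (d (i+1)) as [[|]|]; lia.
    + exfalso. destruct (Hd (i-1-1)) as [E'|E']; rewrite E in E'; [discriminate|].
      symmetry in E'. pose proof (HR _ E') as Ri. unfold R_app in Ri.
      replace (i - 1 - 1 + 1) with (i - 1) in Ri by ring. lia.
    + destruct (d (i-1)) as [[|]|]; destruct (d (i+1)) as [[|]|]; lia.
  - pose proof (HL i Hci) as Li. unfold L_app in *.
    extensionality k. unfold P, move.
    destruct (Z.eqb_spec k i), (Z.eqb_spec (k+1) i), (Z.eqb_spec (k-1) i),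
      (Z.eqb_spec k (i-1)); try lia;
    repeat match goal with
    | H : k = i |- _ => rewrite H; clear H
    | H : k + 1 = i |- _ => rewrite H; clear H
    | H : k - 1 = i |- _ => rewrite H; clear H end;
    rewrite ?Hdi;
    repeat match goal with |- context [d ?x] => destruct (d x) as [[|]|] end; lia.
  - pose proof (HR i Hci) as Ri. unfold R_app in *. unfold P.
    replace (i + 1 - 1) with i by ring. rewrite Hdi.
    pose proof (U i (i+1) (i+1+1) ltac:(lia) ltac:(lia)) as Ui.
    destruct (d (i+1+1)) as [[|]|] eqn:E.
    + exfalso. destruct (Hd (i+1+1)) as [E'|E']; rewrite E in E'; [discriminate|].
      symmetry in E'. pose proof (HL _ E') as Li. unfold L_app in Li.
      replace (i + 1 + 1 - 1) with (i + 1) in Li by ring. lia.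
    + destruct (d (i-1)) as [[|]|]; destruct (d (i+1)) as [[|]|]; lia.
    + destruct (d (i-1)) as [[|]|]; destruct (d (i+1)) as [[|]|]; lia.
  - pose proof (HR i Hci) as Ri. unfold R_app in *.
    extensionality k. unfold P, move.
    destruct (Z.eqb_spec k i), (Z.eqb_spec (k+1) i), (Z.eqb_spec (k-1) i),
      (Z.eqb_spec k (i+1)); try lia;
    repeat match goal with
    | H : k = i |- _ => rewrite H; clear H
    | H : k + 1 = i |- _ => rewrite H; clear H
    | H : k - 1 = i |- _ => rewrite H; clear H end;
    rewrite ?Hdi;
    repeat match goal with |- context [d ?x] => destruct (d x) as [[|]|] end; lia.
Qed.

Definition dm (ch : Z -> option rule) (a : Z) (m : nat) : Z -> option rule :=
  fun k => if andb (a <=? k) (k <? a + Z.of_nat m) then ch k else None.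

Lemma dm_reach c ch a : unimodal c ->
  (forall k, ch k = Some RuleL -> L_app c k) ->
  (forall k, ch k = Some RuleR -> R_app c k) ->
  forall m, reachable SSPM_step c (P c (dm ch a m)).
Proof.
  intros U HL HR m. unfold reachable. induction m.
  - replace (P c (dm ch a 0)) with c. apply rt_refl.
    extensionality k. unfold P, dm. simpl.
    destruct (Z.leb_spec a k), (Z.ltb_spec k (a + 0)), (Z.leb_spec a (k+1)),
      (Z.ltb_spec (k+1) (a + 0)), (Z.leb_spec a (k-1)), (Z.ltb_spec (k-1) (a + 0));
      simpl; try lia.
  - eapply rt_trans; [apply IHm|].
    set (i := a + Z.of_nat m).
    assert (Hdm : dm ch a (S m) = fun k => if k =? i then ch i else dm ch a m k).
    { extensionality k. unfold dm, i. rewrite Nat2Z.inj_succ.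
      destruct (Z.eqb_spec k (a + Z.of_nat m)).
      - subst k. destruct (Z.leb_spec a (a + Z.of_nat m)),
          (Z.ltb_spec (a + Z.of_nat m) (a + Z.succ (Z.of_nat m))); simpl; try lia; auto.
      - destruct (Z.leb_spec a k), (Z.ltb_spec k (a + Z.succ (Z.of_nat m))),
          (Z.ltb_spec k (a + Z.of_nat m)); simpl; try lia; auto. }
    assert (Hdi : dm ch a m i = None).
    { unfold dm, i. destruct (Z.ltb_spec (a + Z.of_nat m) (a + Z.of_nat m)); try lia.
      rewrite Bool.andb_false_r. auto. }
    rewrite Hdm. destruct (ch i) eqn:Ec.
    + apply rt_step. apply step_one with ch; auto.
      intro k. unfold dm. destruct (andb _ _); auto.
    + replace (fun k => if k =? i then None else dm ch a m k) with (dm ch a m).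
      apply rt_refl. extensionality k. destruct (Z.eqb_spec k i); subst; auto.
Qed.

Lemma par_to_seq c c' : unimodal c -> finite_support c -> PSSPM_step c c' ->
  reachable SSPM_step c c'.
Proof.
  intros U [N HN] [ch [H0 [HL [HR H4]]]].
  assert (Hout : forall k, Z.abs N < Z.abs k -> ch k = None).
  { intros k Hk. apply H0. unfold L_app, R_app. rewrite (HN k ltac:(lia)). lia. }
  assert (Hd : dm ch (- Z.abs N) (Z.to_nat (2 * Z.abs N + 1)) = ch).
  { extensionality k. unfold dm. rewrite Z2Nat.id by lia.
    destruct (Z.leb_spec (- Z.abs N) k), (Z.ltb_spec k (- Z.abs N + (2 * Z.abs N + 1)));
      simpl; auto; symmetry; apply Hout; lia. }
  replace c' with (P c ch).
  - rewrite <- Hd. apply dm_reach; auto.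
  - extensionality k. rewrite H4. reflexivity.
Qed.

Lemma psspm_sspm n c : reachable PSSPM_step (single n) c -> reachable SSPM_step (single n) c.
Proof.
  unfold reachable. intro H. apply clos_rt_rtn1 in H. induction H.
  - apply rt_refl.
  - eapply rt_trans; [exact IHclos_refl_trans_n1|].
    destruct (sspm_inv n y IHclos_refl_trans_n1) as [U F].
    apply par_to_seq; auto.
Qed.

Definition tt : config := fun k =>
  if Z.eqb k (-2) then 1%nat else if Z.eqb k (-1) then 1%nat
  else if Z.eqb k 0 then 2%nat else 0%nat.

Lemma ch_cases p ch k :
  (forall i, ch i = None <-> (~ L_app p i /\ ~ R_app p i)) ->
  (forall i, ch i = Some RuleL -> L_app p i) ->
  (forall i, ch i = Some RuleR -> R_app p i) ->
  (ch k = None /\ (p (k-1)%Z + 2 > p k)%nat /\ (p (k+1)%Z + 2 > p k)%nat) \/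
  (ch k = Some RuleL /\ (p (k-1)%Z + 2 <= p k)%nat) \/
  (ch k = Some RuleR /\ (p (k+1)%Z + 2 <= p k)%nat).
Proof.
  intros H0 HL HR. unfold L_app, R_app in *.
  destruct (ch k) as [[|]|] eqn:E.
  - right; left; split; auto; apply HL; auto.
  - right; right; split; auto; apply HR; auto.
  - left. apply H0 in E. split; [reflexivity|lia].
Qed.

Lemma no_pred p : unimodal p -> ~ PSSPM_step p tt.
Proof.
  intros U [ch [H0 [HL [HR H4]]]].
  pose proof (U (-2) (-1) 0 ltac:(lia) ltac:(lia)) as Ui.
  pose proof (H4 (-3)) as Em3. pose proof (H4 (-2)) as Em2. pose proof (H4 (-1)) as Em1.
  pose proof (H4 0) as E0. pose proof (H4 1) as E1.
  pose proof (ch_cases p ch (-3) H0 HL HR) as C3.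
  pose proof (ch_cases p ch (-2) H0 HL HR) as C2.
  pose proof (ch_cases p ch (-1) H0 HL HR) as C1.
  pose proof (ch_cases p ch 0 H0 HL HR) as C0.
  pose proof (ch_cases p ch 1 H0 HL HR) as Cp.
  clear H0 HL HR H4.
  cbv [tt] in *; simpl in *.
  remember (match ch (-4) with Some RuleR => 1%nat | _ => 0%nat end) as x4.
  remember (match ch 2 with Some RuleL => 1%nat | _ => 0%nat end) as x2.
  clear Heqx4 Heqx2.
  destruct C3 as [[E ?]|[[E ?]|[E ?]]]; rewrite E in *;
  destruct C2 as [[E' ?]|[[E' ?]|[E' ?]]]; rewrite E' in *;
  destruct C1 as [[E'' ?]|[[E'' ?]|[E'' ?]]]; rewrite E'' in *;
  destruct C0 as [[F ?]|[[F ?]|[F ?]]]; rewrite F in *;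
  destruct Cp as [[F' ?]|[[F' ?]|[F' ?]]]; rewrite F' in *; lia.
Qed.

Lemma rtn1_inv {A} (R : relation A) x y :
  clos_refl_trans_n1 A R x y -> x = y \/ exists z, clos_refl_trans_n1 A R x z /\ R z y.
Proof. intro H; destruct H; eauto. Qed.

Theorem proposition1 :
  (forall c : config, PSSPM_set c -> SSPM_set c) /\
  (exists c : config, SSPM_set c /\ ~ PSSPM_set c).
Proof.
  split.
  - intros c [n H]. exists n. apply psspm_sspm; auto.
  - exists tt. split.
    + exists 4%nat. unfold reachable.
      apply rt_trans with (move (single 4) 0 (0-1)).
      { apply rt_step. exists 0. left. split; [cbv; lia | reflexivity]. }
      apply rt_trans with (move (move (single 4) 0 (0-1)) 0 (0-1)).
      { apply rt_step. exists 0. left. split; [cbv; lia | reflexivity]. }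
      replace tt with (move (move (move (single 4) 0 (0-1)) 0 (0-1)) (-1) (-1-1)).
      { apply rt_step. exists (-1). left. split; [cbv; lia | reflexivity]. }
      extensionality k. unfold tt, move, single.
      repeat match goal with |- context [Z.eqb ?a ?b] => destruct (Z.eqb_spec a b) end;
        try lia.
    + intros [n H]. unfold reachable in H. apply clos_rt_rtn1 in H.
      destruct (rtn1_inv _ _ _ H) as [E | [p [Hp Hs]]].
      * apply (f_equal (fun f => f (-2))) in E. cbv in E. discriminate.
      * apply clos_rtn1_rt in Hp. apply psspm_sspm in Hp.
        destruct (sspm_inv _ _ Hp) as [U _]. exact (no_pred p U Hs).
Qed.
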